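(* Let $n\ge 3$ and let $A=[a_{ij}]$ be a real $n\times n$ matrix with zero diagonal, with LOP objective function $f_A:\Sigma_n\to\mathbb{R}$, $f_A(\sigma)=\sum_{i=1}^{n-1}\sum_{j=i+1}^{n}a_{\sigma(i)\sigma(j)}$. Then $f_A=f_1+f_2$, where $f_1$ is the LOP objective function of a real $n\times n$ zero-diagonal matrix $B=[b_{ij}]$ satisfying $b_{ij}-b_{ji}+b_{jk}-b_{kj}=b_{ik}-b_{ki}$ for all $i,j,k\in\{1,\dots,n\}$ (equivalently $\hat{(f_1)}_{(n-2,1,1)}=0$), and $f_2$ is the LOP objective function of a real $n\times n$ zero-diagonal matrix $C=[c_{ij}]$ satisfying $\sum_{j=1}^n(c_{ij}-c_{ji})=0$ for all $i$ (equivalently $\hat{(f_2)}_{(n-1,1)}=0$).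
   Context: $\Sigma_n$ is the symmetric group on $\{1,\dots,n\}$; a permutation $\sigma$ is written in one-line notation $[\sigma(1)\ \sigma(2)\ \cdots\ \sigma(n)]$, where $\sigma(k)$ is the row/column index of $A$ placed in position $k$. The Linear Ordering Problem (LOP) with input matrix $A$ asks to maximize $f_A$ over $\Sigma_n$. Fourier transform over $\Sigma_n$: for a function $f:\Sigma_n\to\mathbb{R}$ and a partition $\lambda$ of $n$, with $\rho_\lambda$ the irreducible (matrix) representation of $\Sigma_n$ indexed by $\lambda$, the Fourier coefficient is $\hat f_\lambda=\sum_{\sigma\in\Sigma_n}f(\sigma)\rho_\lambda(\sigma)$ (its vanishing does not depend on the choice of basis for $\rho_\lambda$). *)

(* Defs.v *)
From mathcomp Require Import all_boot all_order all_algebra all_fingroup.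
Set Implicit Arguments. Unset Strict Implicit. Unset Printing Implicit Defensive.
Import GRing.Theory Num.Theory.
Local Open Scope ring_scope.

(* Indices are 0-based: 'I_n = {0,...,n-1} stands for {1,...,n}.
   A permutation s : 'S_n places row/column index s k of A at position k.
   LOP objective: f_A(s) = sum_{i<j} A (s i) (s j). *)
Definition lop_obj (R : nzRingType) (n : nat) (A : 'M[R]_n) (s : 'S_n) : R :=
  \sum_(i < n) \sum_(j < n | (i < j)%N) A (s i) (s j).

Definition zero_diag (R : nzRingType) (n : nat) (A : 'M[R]_n) : Prop :=
  forall i : 'I_n, A i i = 0.

(* Main.v *)
Require Import Defs.
From mathcomp Require Import all_boot all_order all_algebra all_fingroup.
From mathcomp Require Import ring lra.
Import GRing.Theory Num.Theory.
Local Open Scope ring_scope.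

Theorem mainTheorem1 (R : realFieldType) (n : nat) (A : 'M[R]_n) :
  (3 <= n)%N -> zero_diag A ->
  exists B C : 'M[R]_n,
    [/\ zero_diag B,
        (forall i j k : 'I_n, B i j - B j i + (B j k - B k j) = B i k - B k i),
        zero_diag C,
        (forall i : 'I_n, \sum_(j < n) (C i j - C j i) = 0) &
        (forall s : 'S_n, lop_obj A s = lop_obj B s + lop_obj C s)].
Proof.
move=> n3 zA.
pose r := fun i : 'I_n => \sum_(j < n) (A i j - A j i).
pose x := fun i : 'I_n => r i / n%:R.
pose B := \matrix_(i < n, j < n) ((x i - x j) / 2%:R).
have Bij : forall i j, B i j - B j i = x i - x j.
  by move=> i j; rewrite !mxE; field.
have nz : (n%:R : R) != 0 by rewrite pnatr_eq0 -lt0n; apply: leq_trans n3.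
exists B, (A - B); split.
- by move=> i; rewrite mxE subrr mul0r.
- by move=> i j k; rewrite !Bij; ring.
- by move=> i; rewrite !mxE zA subrr mul0r subr0.
- move=> i.
  have -> : \sum_(j < n) ((A - B) i j - (A - B) j i)
     = r i - \sum_(j < n) (x i - x j).
    by rewrite /r -sumrB; apply: eq_bigr => j _; rewrite !mxE; field.
  have sr : \sum_(j < n) r j = 0.
    rewrite /r; under eq_bigr do rewrite sumrB.
    rewrite sumrB (exchange_big _ _ _ _ _ (fun j k => A k j)) /=.
    by rewrite subrr.
  rewrite sumrB sumr_const card_ord /x -mulr_suml sr mul0r subr0.
  rewrite -mulr_natr; field.
  done.
- move=> s; rewrite /lop_obj -big_split /=; apply: eq_bigr => i _.
  rewrite -big_split /=; apply: eq_bigr => j _; rewrite !mxE; ring.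
Qed.
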